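(* In the setting described in the context, full revelation to Seller maximizes Seller's expected payoff among all information structures of Seller.
   Context: Let $0<q_\ell<q_h<\infty$, $Q=[q_\ell,q_h]$, and let $c$ be a real number with $0<c<q_\ell$. Let $F$ be a probability distribution on $[0,1]$ with support $[0,1]$ admitting a twice continuously differentiable density $f:(0,1)\to\mathbb{R}_{>0}$. Define $r(v)=(1-F(v))/f(v)$ and $\psi(v)=v-r(v)$ on $(0,1)$, and assume $\psi'(v)>0$ whenever $\psi(v)>0$. For $q\in Q$, $p(q)$ is the unique maximizer over $p\in\mathbb{R}$ of $(p-c)\big(1-F(p/q)\big)$. Model: the quality $q$ is drawn from a prior $\mu\in\Delta(Q)$ with support $Q$; Buyer's type $v\sim F$ is independent of $q$. Seller's information structure is $(X,\pi^S)$, with $X$ a measurable signal space and $\pi^S:Q\to\Delta(X)$; $\mu^S$ denotes the distribution of Seller's Bayesian posterior mean of $q$. The distribution $\mu^B$ of Buyer's posterior means is assumed to equal $\mu^S$. Seller's expected payoff is $\mathbb{E}_{q\sim\mu^B}\big[(p(q)-c)\big(1-F(p(q)/q)\big)\big]$. Full revelation is the information structure with $X=Q$ and $\pi^S(\cdot\mid q)$ the point mass at $q$. *)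

(* Defs.v *)
From HB Require Import structures.
From mathcomp Require Import all_boot all_order all_algebra.
From mathcomp Require Import all_classical all_reals all_analysis.
Set Implicit Arguments. Unset Strict Implicit. Unset Printing Implicit Defensive.
Import Order.TTheory GRing.Theory Num.Theory.
Import numFieldNormedType.Exports.
Local Open Scope classical_set_scope.
Local Open Scope ring_scope.

Section Defs.
Context {R : realType}.

Definition profit (c : R) (F : R -> R) (p q : R) : R :=
  (p - c) * (1 - F (p / q)).

Definition virtual_value (F f : R -> R) (v : R) : R := v - (1 - F v) / f v.

(* m : X -> R is (a Q-valued version of) Seller's posterior mean of q under
   the information structure (X, k) with prior mu:
   m is measurable and, for every measurable B of signals,
   E[q ; x \in B] = E[m(x) ; x \in B] for the joint law mu(dq) k(q)(dx). *)
Definition is_posterior_mean (ql qh : R) (mu : {measure set R -> \bar R})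
  d (X : measurableType d) (k : R -> {measure set X -> \bar R}) (m : X -> R) :=
  [/\ measurable_fun [set: X] m,
      (forall x, ql <= m x <= qh) &
      (forall B, measurable B ->
        (\int[mu]_(q in `[ql, qh]) ((q%:E * k q B)%E)
         = \int[mu]_(q in `[ql, qh]) \int[k q]_(x in B) (m x)%:E)%E)].

(* Seller's expected payoff E_{y ~ mu^S}[ profit(p(y), y) ], where mu^S is the
   law of the posterior mean m(x), x ~ \int mu(dq) k(q)(dx); written as the
   integral of the composite y = m(x) against that joint law. *)
Definition seller_payoff (c : R) (F : R -> R) (p : R -> R) (ql qh : R)
  (mu : {measure set R -> \bar R})
  d (X : measurableType d) (k : R -> {measure set X -> \bar R}) (m : X -> R)
  : \bar R :=
  (\int[mu]_(q in `[ql, qh]) \int[k q]_x (profit c F (p (m x)) (m x))%:E)%E.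

Definition full_revelation : R -> {measure set R -> \bar R} := fun q => \d_ q.

End Defs.

(* Main.v *)
Require Import Defs.
From HB Require Import structures.
From mathcomp Require Import all_boot all_order all_algebra.
From mathcomp Require Import all_classical all_reals all_analysis.
From mathcomp Require Import measurable_realfun.
From mathcomp Require Import ring lra.
Set Implicit Arguments. Unset Strict Implicit. Unset Printing Implicit Defensive.
Import Order.TTheory GRing.Theory Num.Theory.
Import numFieldNormedType.Exports.
Local Open Scope classical_set_scope.
Local Open Scope ring_scope.
Section convex_part.
Variable R : realType.
Variables (ql qh : R) (V sl ic : R -> R).
Hypothesis Hq : ql < qh.
Hypothesis P1 : forall y z, ql <= y <= qh -> ql <= z <= qh -> sl y * z + ic y <= V z.
Hypothesis P2 : forall y, ql <= y <= qh -> sl y * y + ic y = V y.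

Lemma sl_mono y z : ql <= y <= qh -> ql <= z <= qh -> y <= z -> sl y <= sl z.
Proof.
move=> Hy Hz yz; rewrite le_eqVlt in yz; case/orP: yz => [/eqP->//|yz].
have h1 := P1 Hy Hz; have h2 := P1 Hz Hy; have e1 := P2 Hy; have e2 := P2 Hz.
have : (sl y - sl z) * (z - y) <= 0 by nra.
rewrite pmulr_lle0 ?subr_gt0 // subr_le0 //.
Qed.

Definition Dsl := sl qh - sl ql.

Lemma cvx_approx y g h : ql <= y <= qh -> ql <= g <= qh -> `|y - g| <= h ->
  V y <= sl g * y + ic g + Dsl * h.
Proof.
move=> Hy Hg yg.
have h1 := P1 Hy Hg; have e1 := P2 Hy; have e2 := P2 Hg.
have Hql : ql <= ql <= qh by rewrite lexx ltW.
have Hqh : ql <= qh <= qh by rewrite lexx ltW.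
have s1 := sl_mono Hql Hy (andP Hy).1. have s2 := sl_mono Hy Hqh (andP Hy).2.
have s3 := sl_mono Hql Hg (andP Hg).1. have s4 := sl_mono Hg Hqh (andP Hg).2.
have : V y <= sl g * y + ic g + (sl y - sl g) * (y - g) by nra.
move=> /le_trans; apply; rewrite lerD2l.
apply: (le_trans (ler_norm _)); rewrite normrM.
apply: ler_pM => //; rewrite /Dsl ler_norml; apply/andP; split; lra.
Qed.

Definition Lip := `|sl ql| + `|sl qh|.

Lemma V_lip y z : ql <= y <= qh -> ql <= z <= qh -> `|V y - V z| <= Lip * `|y - z|.
Proof.
move=> Hy Hz.
have Hql : ql <= ql <= qh by rewrite lexx ltW.
have Hqh : ql <= qh <= qh by rewrite lexx ltW.
have s1 := sl_mono Hql Hy (andP Hy).1. have s2 := sl_mono Hy Hqh (andP Hy).2.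
have s3 := sl_mono Hql Hz (andP Hz).1. have s4 := sl_mono Hz Hqh (andP Hz).2.
have h1 := P1 Hy Hz; have h2 := P1 Hz Hy; have e1 := P2 Hy; have e2 := P2 Hz.
have By : `|sl y| <= Lip.
  rewrite /Lip ler_norml; apply/andP; split.
  - have := ler_norm (- sl ql); rewrite normrN; have := normr_ge0 (sl qh); lra.
  - have := ler_norm (sl qh); have := normr_ge0 (sl ql); lra.
have Bz : `|sl z| <= Lip.
  rewrite /Lip ler_norml; apply/andP; split.
  - have := ler_norm (- sl ql); rewrite normrN; have := normr_ge0 (sl qh); lra.
  - have := ler_norm (sl qh); have := normr_ge0 (sl ql); lra.
rewrite ler_norml; apply/andP; split.
- have : V z - V y <= sl z * (z - y) by nra.
  move=> h; have : sl z * (z - y) <= Lip * `|y - z|.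
    apply: (le_trans (ler_norm _)); rewrite normrM distrC.
    by apply: ler_wpM2r.
  lra.
- have : V y - V z <= sl y * (y - z) by nra.
  move=> h; have : sl y * (y - z) <= Lip * `|y - z|.
    apply: (le_trans (ler_norm _)); rewrite normrM.
    by apply: ler_wpM2r.
  lra.
Qed.

End convex_part.
Section grid.
Variable R : realType.
Variables (ql qh : R) (N : nat).
Hypothesis Hq : ql < qh.
Hypothesis HN : (0 < N)%N.

Definition gh := (qh - ql) / N%:R.
Definition gp (j : nat) := ql + j%:R * gh.
Definition cell (j : nat) : set R := [set y | gp j <= y < gp j + gh].

Lemma gh_gt0 : 0 < gh.
Proof. by rewrite /gh divr_gt0 ?subr_gt0 // ltr0n. Qed.

Lemma cell_ex y : ql <= y <= qh -> exists j : 'I_N.+1, cell j y.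
Proof.
move=> /andP[y1 y2]; have h0 := gh_gt0.
set t := (y - ql) / gh.
have t0 : 0 <= t by rewrite /t divr_ge0 // ?subr_ge0 // ltW.
have tN : t <= N%:R.
  rewrite /t ler_pdivrMr // /gh mulrCA divff ?mulr1 ?lerD2r //.
  by rewrite pnatr_eq0 -lt0n.
have jN : (Num.truncn t < N.+1)%N by rewrite ltnS truncn_le_nat; lra.
exists (Ordinal jN); rewrite /cell /gp /=.
have /andP[a b] := truncn_itv t0.
move: a b; rewrite /t ler_pdivlMr // ltr_pdivrMr // => a b.
apply/andP; split; first lra.
move: b; rewrite -addn1 natrD mulrDl mul1r; lra.
Qed.

Lemma cell_uniq y (i j : 'I_N.+1) : cell i y -> cell j y -> i = j.
Proof.
rewrite /cell /gp /= => /andP[a1 a2] /andP[b1 b2]; have h0 := gh_gt0.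
have H1 : (i%:R : R) < j%:R + 1.
  rewrite -(ltr_pM2r h0) mulrDl mul1r; lra.
have H2 : (j%:R : R) < i%:R + 1.
  rewrite -(ltr_pM2r h0) mulrDl mul1r; lra.
move: H1 H2; rewrite !natr1 !ltr_nat !ltnS => H1 H2.
by apply: val_inj; apply/eqP; rewrite eqn_leq H1 H2.
Qed.

Lemma cell_g y (j : 'I_N.+1) : ql <= y <= qh -> cell j y ->
  ql <= gp j <= qh /\ `|y - gp j| <= gh.
Proof.
move=> /andP[y1 y2]; rewrite /cell /gp /= => /andP[a1 a2]; have h0 := gh_gt0.
have : 0 <= j%:R * gh by rewrite mulr_ge0 // ltW.
move=> p; split; first by apply/andP; split; lra.
rewrite ger0_norm; lra.
Qed.

Lemma sum_cell y (G : 'I_N.+1 -> R) (j0 : 'I_N.+1) : cell j0 y ->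
  \sum_(j < N.+1) \1_(cell j) y * G j = G j0.
Proof.
move=> c0; rewrite (bigD1 j0) //= big1 ?addr0.
  by rewrite indicE mem_set // mul1r.
move=> j jn; rewrite indicE memNset ?mul0r //.
by move=> cj; move: jn; rewrite (cell_uniq cj c0) eqxx.
Qed.

End grid.
Section lam.
Local Open Scope ereal_scope.
Variables (R : realType) (d : measure_display) (X : measurableType d).
Variable k : R.-pker R ~> X.
Variable mu : {measure set R -> \bar R}.
Variables (ql qh : R).
Hypothesis HmuQ : mu `[ql, qh]%classic = 1.

Definition nice (f : R * X -> R) :=
  measurable_fun setT f /\ exists M : R, forall z, (`|f z| <= M)%R.

Definition Lam (f : R * X -> R) :=
  \int[mu]_(q in `[ql, qh]) \int[k q]_x (f (q, x))%:E.

Lemma kT q : k q setT = 1.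
Proof. exact: prob_kernel. Qed.

Lemma bnd_of (T : Type) (A : set T) (g : T -> R) (M : R) :
  (forall z, (`|g z| <= M)%R) -> [bounded g x | x in A].
Proof.
move=> hM; rewrite /bounded_near; near=> M' => z _ /=; apply: le_trans (hM z) _.
by near: M'; apply: nbhs_pinfty_ge; rewrite num_real.
Unshelve. all: by end_near. Qed.

Lemma nice_inner_int f q : nice f -> (k q).-integrable setT (fun x => (f (q, x))%:E).
Proof.
move=> [mf [M hM]].
apply: (@measurable_bounded_integrable _ _ R (k q) (fun x => f (q, x)) setT measurableT).
- by rewrite kT ltry.
- exact: measurable_fun_pair2.
- by apply: (@bnd_of _ _ (fun x => f (q, x)) M) => z; exact: hM.
Qed.

Lemma inner_bound (f : R * X -> R) (M : R) (q : R) : measurable_fun setT f -> (forall z, (`|f z| <= M)%R) ->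
  `| \int[k q]_x (f (q, x))%:E | <= M%:E.
Proof.
move=> mf hM.
have mfq : measurable_fun setT (fun x => (f (q, x))%:E).
  by apply/measurable_EFinP; exact: measurable_fun_pair2.
apply: le_trans (le_abse_integral (k q) measurableT mfq) _.
apply: le_trans (@integral_le_bound _ _ _ (k q) setT _ M%:E measurableT mfq _ _) _.
- by rewrite lee_fin (le_trans (normr_ge0 _) (hM (q, point))).
- by apply: aeW => x _ /=; rewrite lee_fin.
- by rewrite kT mule1.
Qed.

Lemma nice_inner_meas f : nice f ->
  measurable_fun setT (fun q => \int[k q]_x (f (q, x))%:E).
Proof.
move=> [mf _].
have mEf : measurable_fun setT (EFin \o f) by apply/measurable_EFinP.
have -> : (fun q => \int[k q]_x (f (q, x))%:E) = (fun q =>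
    \int[k q]_x ((EFin \o f)^\+ (q, x)) - \int[k q]_x ((EFin \o f)^\- (q, x))).
  apply/funext => q; rewrite [LHS]integralE; congr (_ - _); apply: eq_integral => x _; by rewrite ?funeposE ?funenegE.
apply: emeasurable_funB.
- apply: (measurable_fun_integral_finite_kernel (EFin \o f)^\+ k).
  + by move=> z; exact: funepos_ge0.
  + exact: measurable_funepos.
- apply: (measurable_fun_integral_finite_kernel (EFin \o f)^\- k).
  + by move=> z; exact: funeneg_ge0.
  + exact: measurable_funeneg.
Qed.

Let mQ : measurable (`[ql, qh]%classic : set R). Proof. exact: measurable_itv. Qed.

Lemma nice_outer_int f : nice f ->
  mu.-integrable `[ql, qh] (fun q => \int[k q]_x (f (q, x))%:E).
Proof.
move=> nf; have mg := nice_inner_meas nf.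
case: nf => mf [M hM].
apply/integrableP; split; first exact: measurable_funTS.
apply: le_lt_trans (@integral_le_bound _ _ _ mu _ _ M%:E mQ (measurable_funTS mg) _ _) _.
- by rewrite lee_fin (le_trans (normr_ge0 _) (hM (point, point))).
- by apply: aeW => q _ /=; exact: inner_bound.
- by rewrite HmuQ mule1 ltry.
Qed.

Lemma eq_Lam f g : (forall z, f z = g z) -> Lam f = Lam g.
Proof. by move=> fg; congr Lam; apply/funext. Qed.

Lemma niceD f g : nice f -> nice g -> nice (fun z => f z + g z)%R.
Proof.
move=> [mf [M1 h1]] [mg [M2 h2]]; split; first exact: measurable_funD.
exists (M1 + M2)%R => z; apply: le_trans (ler_normD _ _) _; exact: lerD.
Qed.

Lemma niceM f g : nice f -> nice g -> nice (fun z => f z * g z)%R.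
Proof.
move=> [mf [M1 h1]] [mg [M2 h2]]; split; first exact: measurable_funM.
exists (M1 * M2)%R => z; rewrite normrM; exact: ler_pM.
Qed.

Lemma nice_cst r : nice (fun _ => r).
Proof. by split => //; exists `|r|%R. Qed.

Lemma nice_sum n (F : 'I_n -> R * X -> R) : (forall j, nice (F j)) ->
  nice (fun z => \sum_(j < n) F j z)%R.
Proof.
move=> nF; elim: n F nF => [|n IH] F nF.
  by apply: (eq_ind _ nice (nice_cst 0%R)); apply/funext => z; rewrite big_ord0.
have -> : (fun z => \sum_(j < n.+1) F j z)%R =
    (fun z => F ord0 z + \sum_(j < n) F (lift ord0 j) z)%R.
  by apply/funext => z; rewrite big_ord_recl.
apply: niceD => //; exact: IH.
Qed.

Lemma LamD f g : nice f -> nice g -> Lam (fun z => f z + g z)%R = Lam f + Lam g.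
Proof.
move=> nf ng; rewrite /Lam -integralD //; try exact: nice_outer_int.
apply: eq_integral => q _; under eq_integral do rewrite EFinD.
by rewrite integralD //; exact: nice_inner_int.
Qed.

Lemma LamZ r f : nice f -> Lam (fun z => r * f z)%R = r%:E * Lam f.
Proof.
move=> nf; rewrite /Lam -integralZl //; last exact: nice_outer_int.
apply: eq_integral => q _; under eq_integral do rewrite EFinM.
by rewrite integralZl //; exact: nice_inner_int.
Qed.

Lemma Lamcst r : Lam (fun _ => r) = r%:E.
Proof.
rewrite /Lam; under eq_integral => q _ do rewrite integral_cst // kT mule1.
by rewrite integral_cst // HmuQ mule1.
Qed.

Lemma Lamle f g : nice f -> nice g ->
  (forall q x, (ql <= q <= qh)%R -> (f (q, x) <= g (q, x))%R) -> Lam f <= Lam g.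
Proof.
move=> nf ng fg; rewrite /Lam; apply: le_integral => //; try exact: nice_outer_int.
move=> q Hq0; have Hq : (ql <= q <= qh)%R by move: Hq0; rewrite in_setE /= in_itv.
apply: le_integral => //; try exact: nice_inner_int.
by move=> x _; rewrite lee_fin fg.
Qed.

Lemma LamSum n (F : 'I_n -> R * X -> R) : (forall j, nice (F j)) ->
  Lam (fun z => \sum_(j < n) F j z)%R = \sum_(j < n) Lam (F j).
Proof.
move=> nF; rewrite /Lam.
under eq_integral => q _ do (under eq_integral do rewrite -sumEFin;
  rewrite integral_sum //; last by move=> j; exact: nice_inner_int).
by rewrite integral_sum //; move=> j; exact: nice_outer_int.
Qed.

Lemma Lam_fin f : nice f -> Lam f \is a fin_num.
Proof. by move=> nf; apply: integrable_fin_num => //; exact: nice_outer_int. Qed.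

End lam.
Section clampsec.
Variable R : realType.

Definition clamp (a b y : R) := if y < a then a else if b < y then b else y.

Lemma clamp_in a b y : a <= b -> a <= clamp a b y <= b.
Proof.
move=> ab; rewrite /clamp; case: ltrP => ya; first by rewrite lexx ab.
by case: ltrP => yb; [rewrite ab lexx | rewrite ya yb].
Qed.

Lemma clamp_id a b y : a <= y <= b -> clamp a b y = y.
Proof.
move=> /andP[ya yb]; rewrite /clamp ltNge ya /= ltNge yb //.
Qed.

Lemma clamp_lip a b y z : a <= b -> `|clamp a b y - clamp a b z| <= `|y - z|.
Proof.
move=> ab; rewrite /clamp.
case: (ltrP y a) => ya; case: (ltrP z a) => za;
  try case: (ltrP b y) => yb; try case: (ltrP b z) => zb;
  rewrite ?subrr ?normr0 ?normr_ge0 //;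
  rewrite !ler_norml; (apply/andP; split); try lra;
  have := ler_norm (y - z); have := ler_norm (z - y); rewrite distrC; lra.
Qed.

Lemma lip_cont (f : R -> R) L : (forall y z, `|f y - f z| <= L * `|y - z|) ->
  continuous f.
Proof.
move=> hf x; apply/cvgrPdist_le => e e0.
have L1 : 0 < `|L| + 1 by rewrite ltr_pwDr.
have d0 : 0 < e / (`|L| + 1) by rewrite divr_gt0.
near=> t.
have : ball x (e / (`|L| + 1)) t by near: t; exact: (near_ball x (e / (`|L| + 1)) d0).
rewrite -ball_normE /= ltr_pdivlMr // => bt.
have := hf x t; have := ler_norm L; have := normr_ge0 (x - t); nra.
Unshelve. all: by end_near. Qed.

Lemma lip_meas (f : R -> R) L : (forall y z, `|f y - f z| <= L * `|y - z|) ->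
  measurable_fun setT f.
Proof. by move=> h; apply: continuous_measurable_fun; exact: lip_cont h. Qed.

Lemma clamp_meas a b : a <= b -> measurable_fun setT (clamp a b).
Proof. by move=> ab; apply: (@lip_meas _ 1) => y z; rewrite mul1r clamp_lip. Qed.

End clampsec.
Section tower.
Local Open Scope ereal_scope.
Variables (R : realType) (d : measure_display) (X : measurableType d).
Variable k : R.-pker R ~> X.
Variable mu : {measure set R -> \bar R}.
Variables (ql qh : R).
Hypothesis Hq : (ql < qh)%R.
Hypothesis HmuQ : mu `[ql, qh]%classic = 1.
Variable m : X -> R.
Hypothesis mm : measurable_fun setT m.
Hypothesis mQ : forall x, (ql <= m x <= qh)%R.
Hypothesis Hpm : forall B, measurable B ->
  \int[mu]_(q in `[ql, qh]) (q%:E * k q B) =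
  \int[mu]_(q in `[ql, qh]) \int[k q]_(x in B) (m x)%:E.

Let L := Lam k mu ql qh.
Let cl := clamp ql qh.

Lemma nice_ind (B : set X) : measurable B -> nice (fun z : R * X => \1_B z.2 : R).
Proof.
move=> mB; split.
  by apply: measurableT_comp; [exact: measurable_indic | exact: measurable_snd].
by exists 1%R => z; rewrite indicE; case: (_ \in _); rewrite ?normr1 ?normr0.
Qed.

Lemma nice_m : nice (fun z : R * X => m z.2).
Proof.
split; first by apply: measurableT_comp => //; exact: measurable_snd.
exists (`|ql| + `|qh|)%R => z; have /andP[a b] := mQ z.2.
rewrite ler_norml; have := ler_norm ql; have := ler_norm (- ql); rewrite normrN.
have := ler_norm qh; have := normr_ge0 qh; have := normr_ge0 ql.
move=> *; apply/andP; split; lra.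
Qed.

Lemma nice_cl : nice (fun z : R * X => cl z.1).
Proof.
split.
  by apply: measurableT_comp; [exact: clamp_meas (ltW Hq) | exact: measurable_fst].
exists (`|ql| + `|qh|)%R => z; have /andP[a b] := clamp_in z.1 (ltW Hq).
rewrite ler_norml; have := ler_norm ql; have := ler_norm (- ql); rewrite normrN.
have := ler_norm qh; have := normr_ge0 qh; have := normr_ge0 ql.
move=> *; apply/andP; split; rewrite /cl; lra.
Qed.

Lemma tower_key (B : set X) : measurable B ->
  L (fun z => \1_B z.2 * m z.2)%R = L (fun z => \1_B z.2 * cl z.1)%R.
Proof.
move=> mB; rewrite /L /Lam.
have e1 : forall q, \int[k q]_x ((\1_B x * m x)%R)%:E = \int[k q]_(x in B) (m x)%:E.
  move=> q; rewrite -[in RHS](setTI B) integral_mkcondr.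
  by apply: eq_integral => x _; rewrite epatch_indic EFinM muleC.
have e2 : forall q, (ql <= q <= qh)%R ->
    \int[k q]_x ((\1_B x * cl q)%R)%:E = q%:E * k q B.
  move=> q Hq0.
  under eq_integral do rewrite EFinM muleC.
  rewrite integralZl //; last first.
    by have := nice_inner_int k q (nice_ind mB).
  by rewrite integral_indic // setIT /cl clamp_id.
under eq_integral do rewrite e1.
rewrite -Hpm //; apply: eq_integral => q Hq0; rewrite e2 //.
by move: Hq0; rewrite in_setE /= in_itv.
Qed.

Lemma tower_lin (B : set X) a b : measurable B ->
  L (fun z => \1_B z.2 * (a * m z.2 + b))%R = L (fun z => \1_B z.2 * (a * cl z.1 + b))%R.
Proof.
move=> mB; have nI := nice_ind mB; rewrite /L.
rewrite (@eq_Lam _ _ _ _ _ _ _ _ (fun z => a * (\1_B z.2 * m z.2) + b * \1_B z.2)%R); last first.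
  by move=> z; rewrite /=; ring.
rewrite [in RHS](@eq_Lam _ _ _ _ _ _ _ _ (fun z => a * (\1_B z.2 * cl z.1) + b * \1_B z.2)%R); last first.
  by move=> z; rewrite /=; ring.
have n1 := niceM nI nice_m; have n2 := niceM nI nice_cl.
have na1 := niceM (@nice_cst _ _ X a) n1; have na2 := niceM (@nice_cst _ _ X a) n2.
have nb := niceM (@nice_cst _ _ X b) nI.
rewrite (LamD k HmuQ na1 nb) (LamD k HmuQ na2 nb) (LamZ k HmuQ a n1) (LamZ k HmuQ a n2).
by have := tower_key mB; rewrite /L => ->.
Qed.

Variables (V sl ic : R -> R).
Hypothesis PP1 : forall y z, (ql <= y <= qh)%R -> (ql <= z <= qh)%R -> (sl y * z + ic y <= V z)%R.
Hypothesis PP2 : forall y, (ql <= y <= qh)%R -> (sl y * y + ic y = V y)%R.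

Lemma Vcl_lip y z : (`|V (cl y) - V (cl z)| <= Lip ql qh sl * `|y - z|)%R.
Proof.
have Hy := clamp_in y (ltW Hq); have Hz := clamp_in z (ltW Hq).
apply: le_trans (V_lip Hq PP1 PP2 Hy Hz) _.
apply: ler_wpM2l; first by rewrite /Lip addr_ge0.
exact: clamp_lip (ltW Hq).
Qed.

Lemma Vcl_bound y : (`|V (cl y)| <= `|V ql| + Lip ql qh sl * (qh - ql))%R.
Proof.
rewrite /cl; have Hy := clamp_in y (ltW Hq).
have Hl : (ql <= ql <= qh)%R by rewrite lexx ltW.
have := V_lip Hq PP1 PP2 Hy Hl.
have L0 : (0 <= Lip ql qh sl)%R by rewrite /Lip addr_ge0.
have : (`|clamp ql qh y - ql| <= qh - ql)%R.
  case/andP: Hy => a b; rewrite ger0_norm ?subr_ge0 //; lra.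
move=> h1 h2.
have h3 : (Lip ql qh sl * `|clamp ql qh y - ql| <= Lip ql qh sl * (qh - ql))%R by apply: ler_wpM2l.
have := ler_normD (V (clamp ql qh y) - V ql)%R (V ql); rewrite subrK; lra.
Qed.

Lemma nice_Vm : nice (fun z : R * X => V (cl (m z.2))).
Proof.
split.
  have mV : measurable_fun setT (fun y => V (cl y)) := lip_meas Vcl_lip.
  have ms : measurable_fun setT (fun z : R * X => m z.2).
    by apply: measurableT_comp => //; exact: measurable_snd.
  exact: (measurableT_comp mV ms).
by exists (`|V ql| + Lip ql qh sl * (qh - ql))%R => z; exact: Vcl_bound.
Qed.

Lemma nice_Vq : nice (fun z : R * X => V (cl z.1)).
Proof.
split.
  have mV : measurable_fun setT (fun y => V (cl y)) := lip_meas Vcl_lip.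
  exact: (measurableT_comp mV measurable_fst).
by exists (`|V ql| + Lip ql qh sl * (qh - ql))%R => z; exact: Vcl_bound.
Qed.

Lemma main_ineq N : (0 < N)%N ->
  L (fun z => V (cl (m z.2))) <=
  L (fun z => V (cl z.1)) + (Dsl ql qh sl * gh ql qh N)%:E.
Proof.
move=> N0.
set h := gh ql qh N; set D := Dsl ql qh sl.
pose a (j : 'I_N.+1) := sl (gp ql qh N j).
pose b (j : 'I_N.+1) := ic (gp ql qh N j).
pose B (j : 'I_N.+1) := m @^-1` cell ql qh N j.
have mB : forall j, measurable (B j).
  move=> j; rewrite /B -[_ @^-1` _]setTI; apply: mm => //.
  rewrite (_ : cell ql qh N j = `[gp ql qh N j, (gp ql qh N j + gh ql qh N)%R[%classic).
    exact: measurable_itv.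
  by apply/seteqP; split => y; rewrite /cell /= in_itv.
have iB : forall j x, \1_(B j) x = \1_(cell ql qh N j) (m x) :> R.
  by move=> j x; rewrite !indicE.
pose H1 := fun z : R * X =>
  ((\sum_(j < N.+1) \1_(B j) z.2 * (a j * m z.2 + b j)) + D * h)%R.
pose H2 := fun z : R * X =>
  ((\sum_(j < N.+1) \1_(B j) z.2 * (a j * cl z.1 + b j)) + D * h)%R.
have nS1 : forall j, nice (fun z : R * X => \1_(B j) z.2 * (a j * m z.2 + b j))%R.
  move=> j; apply: niceM; first exact: nice_ind.
  by apply: niceD; [apply: niceM; [exact: nice_cst | exact: nice_m] | exact: nice_cst].
have nS2 : forall j, nice (fun z : R * X => \1_(B j) z.2 * (a j * cl z.1 + b j))%R.
  move=> j; apply: niceM; first exact: nice_ind.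
  by apply: niceD; [apply: niceM; [exact: nice_cst | exact: nice_cl] | exact: nice_cst].
have nH1 : nice H1 by apply: niceD; [exact: nice_sum | exact: nice_cst].
have nH2 : nice H2 by apply: niceD; [exact: nice_sum | exact: nice_cst].
have step1 : L (fun z => V (cl (m z.2))) <= L H1.
  apply: (Lamle k HmuQ nice_Vm nH1) => q x Hq0; rewrite /H1 /=.
  have [j0 c0] := cell_ex Hq N0 (mQ x).
  under eq_bigr do rewrite iB.
  rewrite (sum_cell Hq N0 (fun j => a j * m x + b j)%R c0).
  rewrite /cl (clamp_id (mQ x)).
  have [gQ gd] := cell_g Hq N0 (mQ x) c0.
  by have := cvx_approx Hq PP1 PP2 (mQ x) gQ gd; rewrite /a /b /D /h.
have step2 : L H1 = L H2.
  rewrite /L /H1 /H2 (LamD k HmuQ (nice_sum nS1) (@nice_cst _ _ X (D * h)%R)).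
  rewrite (LamD k HmuQ (nice_sum nS2) (@nice_cst _ _ X (D * h)%R)).
  congr (_ + _); rewrite (LamSum k HmuQ nS1) (LamSum k HmuQ nS2).
  by apply: eq_bigr => j _; exact: tower_lin.
have nVh := niceD nice_Vq (@nice_cst _ _ X (D * h)%R).
have step3 : L H2 <= L (fun z => V (cl z.1) + D * h)%R.
  apply: (Lamle k HmuQ nH2 nVh) => q x Hq0; rewrite /H2 /=.
  have [j0 c0] := cell_ex Hq N0 (mQ x).
  under eq_bigr do rewrite iB.
  rewrite (sum_cell Hq N0 (fun j => a j * cl q + b j)%R c0) lerD2r.
  have [gQ gd] := cell_g Hq N0 (mQ x) c0.
  rewrite /cl (clamp_id Hq0); exact: PP1 gQ Hq0.
have step4 : L (fun z => V (cl z.1) + D * h)%R = L (fun z => V (cl z.1)) + (D * h)%:E.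
  by rewrite /L (LamD k HmuQ nice_Vq (@nice_cst _ _ X (D * h)%R)) Lamcst.
by rewrite -step4; apply: le_trans step1 _; rewrite step2.
Qed.

End tower.
Unset Implicit Arguments.
Theorem corollary1 (R : realType) (ql qh c : R) (F f p : R -> R)
  (mu : probability R R)
  (* 0 < c < q_l < q_h *)
  (Hc0 : 0 < c) (Hcql : c < ql) (Hq : ql < qh)
  (* f : (0,1) -> R_{>0}, twice continuously differentiable *)
  (Hfpos : forall v : R, 0 < v < 1 -> 0 < f v)
  (Hfder : forall v : R, 0 < v < 1 ->
     [/\ derivable f v 1, derivable (derive1 f) v 1 & {for v, continuous (derive1 (derive1 f))}])
  (* F is the c.d.f. of the law on [0,1] with density f *)
  (HF0 : forall v : R, v < 0 -> F v = 0)
  (HF1 : forall v : R, 1 <= v -> F v = 1)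
  (HFf : forall v : R, 0 <= v <= 1 ->
     (\int[lebesgue_measure]_(x in `[0%R, v]) (f x)%:E)%E = (F v)%:E)
  (* psi'(v) > 0 whenever psi(v) > 0 *)
  (Hpsi : forall v : R, 0 < v < 1 -> 0 < virtual_value F f v ->
     0 < derive1 (virtual_value F f) v)
  (* p(q) is the unique maximizer of (p - c)(1 - F(p/q)) over p in R *)
  (Hp : forall q, ql <= q <= qh ->
     forall p', p' != p q -> profit c F p' q < profit c F (p q) q)
  (* the prior mu is concentrated on Q = [ql, qh] with support Q *)
  (HmuQ : mu `[ql, qh]%classic = 1%E)
  (Hsupp : forall x e : R, ql <= x <= qh -> 0 < e -> (0 < mu `](x - e)%R, (x + e)%R[%classic)%E) :
  forall (m0 : R -> R),
    is_posterior_mean ql qh mu full_revelation m0 ->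
  forall (d : measure_display) (X : measurableType d) (k : R.-pker R ~> X)
    (m : X -> R),
    is_posterior_mean ql qh mu k m ->
    (seller_payoff c F p ql qh mu k m
     <= seller_payoff c F p ql qh mu full_revelation m0)%E.
Proof.
move=> m0 [mm0 m0Q H0] d X k m [mm mQ Hpm].
have ql0 : 0 < ql by apply: lt_trans Hcql.
pose V := fun y => profit c F (p y) y.
pose sl := fun y => (p y / y) * (1 - F (p y / y)).
pose ic := fun y => - c * (1 - F (p y / y)).
have PP1 : forall y z, ql <= y <= qh -> ql <= z <= qh -> sl y * z + ic y <= V z.
  move=> y z Hy Hz; have z0 : z != 0.
    by apply/negP => /eqP z0; move: Hz; rewrite z0 => /andP[+ _]; rewrite leNgt ql0.
  have e : profit c F (z * (p y / y)) z = sl y * z + ic y.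
    by rewrite /profit /sl /ic (mulrC z) mulfK //; ring.
  rewrite -e /V; case: (eqVneq (z * (p y / y)) (p z)) => [-> //| ne].
  exact: ltW (Hp z Hz _ ne).
have PP2 : forall y, ql <= y <= qh -> sl y * y + ic y = V y.
  move=> y Hy; have y0 : y != 0.
    by apply/negP => /eqP y0; move: Hy; rewrite y0 => /andP[+ _]; rewrite leNgt ql0.
  by rewrite /sl /ic /V /profit mulrAC divfK //; ring.
have Qm : measurable (`[ql, qh]%classic : set R) by exact: measurable_itv.
have MI := main_ineq Hq HmuQ mm mQ Hpm PP1 PP2.
have nA := nice_Vm Hq mm PP1 PP2.
have nB := nice_Vq X Hq PP1 PP2.
have fA := Lam_fin k HmuQ nA.
have fB := Lam_fin k HmuQ nB.
have mVc : measurable_fun setT (fun y => V (clamp ql qh y)) := lip_meas (Vcl_lip Hq PP1 PP2).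
have LHS : seller_payoff c F p ql qh mu k m =
    Lam k mu ql qh (fun z => V (clamp ql qh (m z.2))).
  rewrite /seller_payoff /Lam; apply: eq_integral => q _; apply: eq_integral => x _.
  by rewrite (clamp_id (mQ x)).
have RHS1 : seller_payoff c F p ql qh mu full_revelation m0 =
    (\int[mu]_(q in `[ql, qh]) (V (clamp ql qh (m0 q)))%:E)%E.
  rewrite /seller_payoff; apply: eq_integral => q _; rewrite /full_revelation.
  transitivity (\int[\d_q]_x (V (clamp ql qh (m0 x)))%:E)%E.
    by apply: eq_integral => x _; rewrite (clamp_id (m0Q x)).
  rewrite integral_dirac //; first by rewrite diracT mul1e.
  by apply/measurable_EFinP; exact: measurableT_comp mVc mm0.
have bQ : forall y, `[ql, qh]%classic y -> `|y| <= `|ql| + `|qh|.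
  move=> y; rewrite /= in_itv /= => /andP[a b].
  rewrite ler_norml; have := ler_norm ql; have := ler_norm (- ql); rewrite normrN.
  have := ler_norm qh; have := normr_ge0 qh; have := normr_ge0 ql.
  move=> *; apply/andP; split; lra.
have intQ : mu.-integrable `[ql, qh] (fun q => q%:E).
  apply: (@measurable_bounded_integrable _ _ R mu (fun q => q) _ Qm).
  - exact: (le_lt_trans (probability_le1 mu Qm) (ltry _)).
  - exact: measurable_funTS.
  - rewrite /bounded_near; near=> M => y Qy /=; apply: le_trans (bQ y Qy) _.
    by near: M; apply: nbhs_pinfty_ge; rewrite num_real.
have ae1 : ae_eq mu `[ql, qh]%classic (fun q => q%:E) (EFin \o m0).
  apply: (integral_ae_eq Qm intQ).
    by apply/measurable_EFinP; exact: measurable_funTS.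
  move=> E EQ mE; have h := H0 E mE.
  have dE : forall q A, full_revelation q A = (\1_A q)%:E.
    by move=> q0 A; exact: diracE.
  have h1 : (\int[mu]_(q in `[ql, qh]) (q%:E * full_revelation q E) =
      \int[mu]_(q in E) q%:E)%E.
    rewrite -[in RHS](setIidr EQ) integral_mkcondr; apply: eq_integral => q _.
    by rewrite epatch_indic dE.
  have h2 : (\int[mu]_(q in `[ql, qh]) \int[full_revelation q]_(x in E) (m0 x)%:E =
      \int[mu]_(q in E) (EFin \o m0) q)%E.
    rewrite -[in RHS](setIidr EQ) integral_mkcondr; apply: eq_integral => q _.
    rewrite /full_revelation (integral_dirac _ mE).
      by rewrite epatch_indic diracE muleC.
    by apply/measurable_EFinP; exact: measurable_funTS.
  by rewrite -h1 h h2.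
have ae2 : ae_eq mu `[ql, qh]%classic (fun q => (V (clamp ql qh (m0 q)))%:E)
    (fun q => (V (clamp ql qh q))%:E).
  by apply: filterS ae1 => q h Qq; move: (h Qq) => /= [<-].
have RHS2 : (\int[mu]_(q in `[ql, qh]) (V (clamp ql qh (m0 q)))%:E =
    \int[mu]_(q in `[ql, qh]) (V (clamp ql qh q))%:E)%E.
  apply: (ae_eq_integral _ _ Qm _ _ ae2).
  - apply: measurable_funTS; apply/measurable_EFinP; exact: measurableT_comp mVc mm0.
  - by apply: measurable_funTS; apply/measurable_EFinP.
have LamB : Lam k mu ql qh (fun z => V (clamp ql qh z.1)) =
    (\int[mu]_(q in `[ql, qh]) (V (clamp ql qh q))%:E)%E.
  rewrite /Lam; apply: eq_integral => q _ /=.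
  by rewrite integral_cst // kT mule1.
rewrite LHS RHS1 RHS2 -LamB.
have Hql : ql <= ql <= qh by rewrite lexx ltW.
have Hqh : ql <= qh <= qh by rewrite lexx ltW.
have D0 : 0 <= Dsl ql qh sl.
  rewrite /Dsl subr_ge0; have := @sl_mono R ql qh V sl ic PP1 PP2 ql qh Hql Hqh (ltW Hq); exact.
rewrite -(fineK fA) -(fineK fB) lee_fin; apply/ler_addgt0Pr => e e0.
set K := Dsl ql qh sl * (qh - ql).
have K0 : 0 <= K by rewrite /K mulr_ge0 // subr_ge0 ltW.
pose N := (Num.truncn (K / e)).+1.
have := MI N (ltn0Sn _); rewrite -(fineK fA) -(fineK fB) -EFinD lee_fin => hN.
apply: le_trans hN _; rewrite lerD2l /gh mulrA -/K.
have N0 : (0 : R) < N%:R by rewrite ltr0n.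
rewrite ler_pdivrMr //.
have := truncnS_gt (K / e); rewrite -/N ltr_pdivrMr // => hK.
by rewrite mulrC ltW.
Unshelve. all: by end_near.
Qed.
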